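(* Consider the robot rendezvous system $$\dot{x}_k(t)=x_{k-1}(t)-x_k(t),\quad k\in\mathbb{Z},\ t\ge0,$$ with a good initial constellation $x_0=(x_k(0))_{k\in\mathbb{Z}}\in\ell^\infty(\mathbb{Z})$. Suppose there is $c\in\mathbb{C}$ such that $$\sup_{k\in\mathbb{Z}}\bigg|\frac{1}{n}\sum_{j=1}^n x_{k-j}(0)-c\bigg|=O(n^{-1})\quad\text{as } n\to\infty.$$ Then $\sup_{k\in\mathbb{Z}}|x_k(t)-c|=O(t^{-1/2})$ as $t\to\infty$.
   Context: $\ell^\infty(\mathbb{Z})$ is the Banach space of bounded doubly infinite complex sequences with the supremum norm. $S$ denotes the right-shift operator on $\ell^\infty(\mathbb{Z})$, $S(x_k)=(x_{k-1})$. For $x_0\in\ell^\infty(\mathbb{Z})$, the solution of the system is $x(t)=(x_k(t))_{k\in\mathbb{Z}}=\exp(t(S-I))x_0$, $t\ge0$. An initial constellation $x_0\in\ell^\infty(\mathbb{Z})$ is called good if there exist constants $c_k\in\mathbb{C}$, $k\in\mathbb{Z}$, such that the corresponding solution satisfies $\sup_{k\in\mathbb{Z}}|x_k(t)-c_k|\to0$ as $t\to\infty$. For nonnegative functions, $a(t)=O(b(t))$ as $t\to\infty$ means there is $C>0$ with $a(t)\le Cb(t)$ for all sufficiently large $t$; similarly for sequences. *)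

(* Defs.v *)
From Stdlib Require Import Reals Lra Lia ZArith.
Open Scope R_scope.

Definition Cx := (R * R)%type.
Definition Cre (z : Cx) : R := fst z.
Definition Cim (z : Cx) : R := snd z.
Definition Cadd (z w : Cx) : Cx := (fst z + fst w, snd z + snd w).
Definition Csub (z w : Cx) : Cx := (fst z - fst w, snd z - snd w).
Definition Cscal (a : R) (z : Cx) : Cx := (a * fst z, a * snd z).
Definition Cmod (z : Cx) : R := sqrt (fst z ^ 2 + snd z ^ 2).

Fixpoint csum1 (f : nat -> Cx) (n : nat) : Cx :=
  match n with
  | O => (0, 0)
  | S m => Cadd (csum1 f m) (f (S m))
  end.

Definition bounded_seq (x0 : Z -> Cx) : Prop :=
  exists M : R, forall k : Z, Cmod (x0 k) <= M.

(* x is the solution x(t) = exp(t(S-I)) x0, written out: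
   x_k(t) = sum_{j>=0} e^{-t} t^j / j! * x_{k-j}(0)   (for t >= 0). *)
Definition is_solution (x0 : Z -> Cx) (x : Z -> R -> Cx) : Prop :=
  forall (k : Z) (t : R), 0 <= t ->
    infinite_sum (fun j => exp (- t) * t ^ j / INR (fact j) * Cre (x0 (k - Z.of_nat j)%Z))
                 (Cre (x k t)) /\
    infinite_sum (fun j => exp (- t) * t ^ j / INR (fact j) * Cim (x0 (k - Z.of_nat j)%Z))
                 (Cim (x k t)).

Definition good (x0 : Z -> Cx) (x : Z -> R -> Cx) : Prop :=
  exists c : Z -> Cx, forall eps : R, 0 < eps ->
    exists T : R, forall t : R, T <= t -> forall k : Z, Cmod (Csub (x k t) (c k)) <= eps.

(* Main.v *)
Require Import Defs.
From Stdlib Require Import Reals ZArith Lra Lia.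
Open Scope R_scope.

Lemma cv_const (a : R) : Un_cv (fun _ => a) a.
Proof. intros e He; exists 0%nat; intros; unfold R_dist; rewrite Rminus_diag, Rabs_R0; lra. Qed.

Lemma cv_squeeze0 (u v : nat -> R) : (forall n, 0 <= u n <= v n) -> Un_cv v 0 -> Un_cv u 0.
Proof.
  intros H Hv e He. destruct (Hv e He) as [N HN]. exists N. intros n Hn.
  specialize (HN n Hn). specialize (H n). unfold R_dist in *.
  rewrite Rminus_0_r in *. rewrite Rabs_right in * by lra. lra.
Qed.

Section Core.
Variable t : R.
Hypothesis tpos : 0 < t.

Definition q (n : nat) : R := t ^ n / INR (fact n).
Definition E (n : nat) : R := sum_f_R0 q n.

Lemma q_pos n : 0 <= q n.
Proof. unfold q. apply Rmult_le_pos. apply pow_le; lra.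
  apply Rlt_le, Rinv_0_lt_compat, INR_fact_lt_0. Qed.

Lemma q_succ n : q (S n) = q n * t / (INR n + 1).
Proof. unfold q. rewrite fact_simpl, mult_INR, <- S_INR. simpl pow.
  field. split. apply INR_fact_neq_0. apply not_0_INR; lia. Qed.

Fixpoint H (n : nat) : R := match n with O => 0 | S m => H m + Rabs (q m - q (S m)) end.

Lemma abel_aux (a : nat -> R) (B : R) : (forall n, Rabs (sum_f_R0 a n) <= B) ->
  forall n, Rabs (sum_f_R0 (fun j => q j * a j) n - q n * sum_f_R0 a n) <= B * H n.
Proof.
  intros HB n; induction n as [|n IH].
  - simpl. rewrite Rminus_diag, Rabs_R0; lra.
  - rewrite !tech5. simpl H.
    replace (sum_f_R0 (fun j => q j * a j) n + q (S n) * a (S n) - q (S n) * (sum_f_R0 a n + a (S n)))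
      with ((sum_f_R0 (fun j => q j * a j) n - q n * sum_f_R0 a n) + sum_f_R0 a n * (q n - q (S n))) by ring.
    eapply Rle_trans. apply Rabs_triang. rewrite Rabs_mult, Rmult_plus_distr_l.
    apply Rplus_le_compat. exact IH. apply Rmult_le_compat_r. apply Rabs_pos. apply HB.
Qed.

Lemma abel (a : nat -> R) (B : R) : (forall n, Rabs (sum_f_R0 a n) <= B) ->
  forall n, Rabs (sum_f_R0 (fun j => q j * a j) n) <= B * (q n + H n).
Proof.
  intros HB n. pose proof (abel_aux a B HB n) as h.
  replace (sum_f_R0 (fun j => q j * a j) n) with
    ((sum_f_R0 (fun j => q j * a j) n - q n * sum_f_R0 a n) + q n * sum_f_R0 a n) by ring.
  eapply Rle_trans. apply Rabs_triang. rewrite Rabs_mult, (Rabs_right (q n)) by (apply Rle_ge, q_pos).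
  pose proof (HB n). pose proof (q_pos n).
  assert (q n * Rabs (sum_f_R0 a n) <= q n * B) by (apply Rmult_le_compat_l; lra). nra.
Qed.

Lemma amgm (u s : R) : 0 < s -> Rabs u <= (u * u + s * s) / (2 * s).
Proof.
  intros hs. apply (Rmult_le_reg_r (2*s)); [lra|]. unfold Rdiv. rewrite Rmult_assoc, Rinv_l, Rmult_1_r by lra.
  assert (Hu : u*u = Rabs u * Rabs u) by (rewrite <- Rabs_mult, Rabs_right; [ring| apply Rle_ge; nra]).
  rewrite Hu. pose proof (pow2_ge_0 (Rabs u - s)). simpl in *. nra.
Qed.

Lemma Hbound n : H n <= E n / sqrt t + q n * (t - INR n - 1) / (2 * sqrt t).
Proof.
  set (s := sqrt t). assert (hs : 0 < s) by (apply sqrt_lt_R0; lra).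
  assert (hss : s * s = t) by (apply sqrt_sqrt; lra).
  induction n as [|n IH].
  - simpl. unfold E, q; simpl. unfold Rdiv. replace (t - 0 - 1) with (t-1) by ring.
    rewrite Rinv_1. apply Rle_trans with ((t+1)/(2*s)); [|right; field; lra].
    apply Rmult_le_pos; [lra| apply Rlt_le, Rinv_0_lt_compat; lra].
  - simpl H. unfold E. rewrite tech5. fold (E n).
    set (Q := q n). set (u := INR n + 1).
    assert (hu : 0 < u) by (unfold u; pose proof (pos_INR n); lra).
    assert (hQ : 0 <= Q) by apply q_pos.
    rewrite S_INR. fold u. rewrite (q_succ n). fold Q u.
    assert (Hd : Rabs (Q - Q * t / u) <= (Q * t / u) / s + Q * t / u * (t - u - 1) / (2 * s) - Q * (t - INR n - 1) / (2 * s)).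
    { replace (Q - Q*t/u) with (Q/u * (u - t)) by (field; lra).
      replace ((Q * t / u) / s + Q * t / u * (t - u - 1) / (2 * s) - Q * (t - INR n - 1) / (2 * s))
        with (Q/u * (((u-t)*(u-t) + s*s)/(2*s))) by (unfold u; rewrite hss; field; pose proof (pos_INR n); repeat split; lra).
      rewrite Rabs_mult, (Rabs_right (Q/u)).
      2:{ apply Rle_ge, Rmult_le_pos; [lra| apply Rlt_le, Rinv_0_lt_compat; lra]. }
      apply Rmult_le_compat_l. apply Rmult_le_pos; [lra| apply Rlt_le, Rinv_0_lt_compat; lra].
      apply amgm; lra. }
    replace ((E n + Q * t / u) / s) with (E n / s + (Q*t/u)/s) by (field; lra).
    change (q n) with Q in IH; lra.
Qed.
End Core.

Lemma pow2_ge n : INR n + 1 <= 2 ^ n.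
Proof. induction n. simpl; lra. rewrite S_INR. simpl. pose proof (pos_INR n). lra. Qed.

Lemma E_cv t : Un_cv (E t) (exp t).
Proof.
  unfold exp. destruct (exist_exp t) as [l Hl]. simpl. intros e He. destruct (Hl e He) as [N HN].
  exists N. intros n Hn. unfold E. rewrite (sum_eq _ (fun i => / INR (fact i) * t ^ i)). apply HN; lia.
  intros; unfold q, Rdiv; ring.
Qed.

Lemma cv_lim_eq u l l' : Un_cv u l -> l = l' -> Un_cv u l'.
Proof. intros; subst; auto. Qed.

Lemma qrem_cv t : 0 < t -> Un_cv (fun n => q t n * Rabs (t - INR n - 1)) 0.
Proof.
  intros ht. apply cv_squeeze0 with (fun n => t * q t n + (2*t)^n / INR (fact n)).
  - intros n. split. apply Rmult_le_pos. apply q_pos; lra. apply Rabs_pos.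
    pose proof (q_pos t ht n). pose proof (pos_INR n). pose proof (pow2_ge n).
    assert (Rabs (t - INR n - 1) <= t + (INR n + 1)) by (apply Rabs_le; lra).
    assert (q t n * Rabs (t - INR n - 1) <= q t n * (t + (INR n + 1))) by (apply Rmult_le_compat_l; lra).
    assert (q t n * (INR n + 1) <= q t n * 2^n) by (apply Rmult_le_compat_l; lra).
    replace ((2*t)^n / INR (fact n)) with (q t n * 2^n) by (unfold q; rewrite Rpow_mult_distr; field; apply INR_fact_neq_0).
    nra.
  - apply cv_lim_eq with (t * 0 + 0). apply CV_plus. apply CV_mult. apply cv_const. apply cv_speed_pow_fact.
    apply cv_speed_pow_fact. ring.
Qed.

Lemma core (t : R) (a : nat -> R) (B L : R) : 0 < t -> 0 <= B ->
  (forall n, Rabs (sum_f_R0 a n) <= B) ->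
  Un_cv (fun n => sum_f_R0 (fun j => exp (- t) * t ^ j / INR (fact j) * a j) n) L ->
  Rabs L <= B / sqrt t.
Proof.
  intros ht hB HB HL.
  set (s := sqrt t). assert (hs : 0 < s) by (apply sqrt_lt_R0; lra).
  pose proof (exp_pos (-t)) as he.
  apply (@Rle_cv_lim (fun n => Rabs (sum_f_R0 (fun j => exp (- t) * t ^ j / INR (fact j) * a j) n))
     (fun n => exp (-t) * B * (q t n + E t n / s + q t n * Rabs (t - INR n - 1) / (2 * s)))).
  - intros n. rewrite (sum_eq _ (fun j => (q t j * a j) * exp (-t))) by (intros; unfold q; unfold Rdiv; ring).
    rewrite <- scal_sum, Rabs_mult, (Rabs_right (exp (-t))) by lra.
    rewrite Rmult_assoc. apply Rmult_le_compat_l. lra.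
    eapply Rle_trans. apply (abel t ht a B HB).
    apply Rmult_le_compat_l. lra.
    pose proof (Hbound t ht n) as Hb. fold s in Hb.
    assert (q t n * (t - INR n - 1) <= q t n * Rabs (t - INR n - 1)) by (apply Rmult_le_compat_l; [apply q_pos; lra| apply RRle_abs]).
    assert (q t n * (t - INR n - 1) / (2 * s) <= q t n * Rabs (t - INR n - 1) / (2 * s)).
    { unfold Rdiv. apply Rmult_le_compat_r. apply Rlt_le, Rinv_0_lt_compat; lra. lra. }
    lra.
  - apply cv_cvabs. exact HL.
  - apply cv_lim_eq with (exp (-t) * B * (0 + exp t / s + 0 / (2 * s))).
    + apply CV_mult. apply cv_const. apply CV_plus. apply CV_plus. apply cv_speed_pow_fact.
      unfold Rdiv. apply CV_mult. apply E_cv. apply cv_const.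
      apply CV_mult. apply qrem_cv; lra. apply cv_const.
    + rewrite exp_Ropp. field. split; try lra. pose proof (exp_pos t); lra.
Qed.

Lemma Cmod_ge0 z : 0 <= Cmod z.
Proof. apply sqrt_pos. Qed.

Lemma Cre_le z : Rabs (Cre z) <= Cmod z.
Proof. unfold Cmod, Cre. rewrite <- sqrt_Rsqr_abs. apply sqrt_le_1_alt. unfold Rsqr; simpl.
  pose proof (pow2_ge_0 (snd z)); simpl in *; lra. Qed.

Lemma Cim_le z : Rabs (Cim z) <= Cmod z.
Proof. unfold Cmod, Cim. rewrite <- sqrt_Rsqr_abs. apply sqrt_le_1_alt. unfold Rsqr; simpl.
  pose proof (pow2_ge_0 (fst z)); simpl in *; lra. Qed.

Lemma Cmod_le z : Cmod z <= Rabs (Cre z) + Rabs (Cim z).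
Proof.
  unfold Cmod, Cre, Cim. rewrite <- (sqrt_Rsqr (Rabs (fst z) + Rabs (snd z))).
  2:{ pose proof (Rabs_pos (fst z)); pose proof (Rabs_pos (snd z)); lra. }
  apply sqrt_le_1_alt. unfold Rsqr.
  rewrite <- (pow2_abs (fst z)), <- (pow2_abs (snd z)).
  pose proof (Rabs_pos (fst z)); pose proof (Rabs_pos (snd z)). nra.
Qed.

Section Part.
Variable pr : Cx -> R.
Hypothesis pr_add : forall z w, pr (Cadd z w) = pr z + pr w.
Hypothesis pr_scal : forall a z, pr (Cscal a z) = a * pr z.
Hypothesis pr_sub : forall z w, pr (Csub z w) = pr z - pr w.
Hypothesis pr_le : forall z, Rabs (pr z) <= Cmod z.
Hypothesis pr_0 : pr (0, 0) = 0.

Lemma sum_csum (x0 : Z -> Cx) (c : Cx) (k : Z) n :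
  sum_f_R0 (fun j => pr (x0 (k - Z.of_nat j)%Z) - pr c) n =
  (pr (x0 (k - Z.of_nat 0)%Z) - pr c) + (pr (csum1 (fun j => x0 (k - Z.of_nat j)%Z) n) - INR n * pr c).
Proof.
  induction n. simpl. rewrite pr_0; ring.
  rewrite tech5, IHn. change (csum1 ?f (S n)) with (Cadd (csum1 f n) (f (S n))). rewrite pr_add, S_INR. ring.
Qed.

Lemma partial_bound (x0 : Z -> Cx) (M C0 : R) (N : nat) (c : Cx) (k : Z) :
  (forall k, Cmod (x0 k) <= M) -> 0 < C0 ->
  (forall n : nat, (N <= n)%nat -> (1 <= n)%nat ->
     forall k : Z,
       Cmod (Csub (Cscal (/ INR n) (csum1 (fun j => x0 (k - Z.of_nat j)%Z) n)) c)
         <= C0 * / INR n) ->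
  forall n, Rabs (sum_f_R0 (fun j => pr (x0 (k - Z.of_nat j)%Z) - pr c) n)
    <= C0 + (M + Rabs (pr c)) + INR N * (M + Rabs (pr c)).
Proof.
  intros HM HC0 Hh n. set (K := M + Rabs (pr c)).
  assert (hM : 0 <= M) by (pose proof (HM 0%Z); pose proof (Cmod_ge0 (x0 0%Z)); lra).
  assert (hK : 0 <= K) by (unfold K; pose proof (Rabs_pos (pr c)); lra).
  assert (ha : forall j, Rabs (pr (x0 (k - Z.of_nat j)%Z) - pr c) <= K).
  { intros j. eapply Rle_trans. apply Rabs_triang. rewrite Rabs_Ropp. unfold K.
    pose proof (pr_le (x0 (k - Z.of_nat j)%Z)). pose proof (HM (k - Z.of_nat j)%Z). lra. }
  assert (hN : 0 <= INR N * K) by (apply Rmult_le_pos; [apply pos_INR|lra]).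
  destruct (le_lt_dec N n) as [hn|hn].
  - destruct n as [|n].
    + cbn [sum_f_R0]. pose proof (ha 0%nat). lra.
    + rewrite sum_csum. eapply Rle_trans. apply Rabs_triang.
      pose proof (ha 0%nat).
      specialize (Hh (S n) hn ltac:(lia) k). eapply Rle_trans in Hh; [|apply pr_le].
      rewrite pr_sub, pr_scal in Hh.
      set (Sm := pr (csum1 (fun j => x0 (k - Z.of_nat j)%Z) (S n))) in *.
      assert (hI : 0 < INR (S n)) by (apply lt_0_INR; lia).
      assert (Rabs (Sm - INR (S n) * pr c) <= C0).
      { replace (Sm - INR (S n) * pr c) with (INR (S n) * (/ INR (S n) * Sm - pr c)) by (field; lra).
        rewrite Rabs_mult, Rabs_right by lra.
        apply (Rmult_le_compat_l (INR (S n))) in Hh; [|lra].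
        replace (INR (S n) * (C0 * / INR (S n))) with C0 in Hh by (field; lra). exact Hh. }
      lra.
  - assert (Hm : forall m, Rabs (sum_f_R0 (fun j => pr (x0 (k - Z.of_nat j)%Z) - pr c) m) <= (INR m + 1) * K).
    { induction m. cbn [sum_f_R0 INR]. pose proof (ha 0%nat); lra.
      rewrite tech5, S_INR. eapply Rle_trans. apply Rabs_triang. pose proof (ha (S m)). lra. }
    eapply Rle_trans. apply Hm.
    assert (INR n + 1 <= INR N) by (rewrite <- S_INR; apply le_INR; lia).
    assert ((INR n + 1) * K <= INR N * K) by (apply Rmult_le_compat_r; lra). lra.
Qed.

Lemma part (x0 : Z -> Cx) (M C0 : R) (N : nat) (c : Cx) (k : Z) (t Lx : R) :
  (forall k, Cmod (x0 k) <= M) -> 0 < C0 ->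
  (forall n : nat, (N <= n)%nat -> (1 <= n)%nat ->
     forall k : Z,
       Cmod (Csub (Cscal (/ INR n) (csum1 (fun j => x0 (k - Z.of_nat j)%Z) n)) c)
         <= C0 * / INR n) ->
  0 < t ->
  infinite_sum (fun j => exp (- t) * t ^ j / INR (fact j) * pr (x0 (k - Z.of_nat j)%Z)) Lx ->
  Rabs (Lx - pr c) <= (C0 + (M + Rabs (pr c)) + INR N * (M + Rabs (pr c))) / sqrt t.
Proof.
  intros HM HC0 Hh ht Hs.
  assert (hM : 0 <= M) by (pose proof (HM 0%Z); pose proof (Cmod_ge0 (x0 0%Z)); lra).
  apply core with (a := fun j => pr (x0 (k - Z.of_nat j)%Z) - pr c).
  - exact ht.
  - pose proof (Rabs_pos (pr c)). pose proof (pos_INR N).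
    assert (0 <= INR N * (M + Rabs (pr c))) by (apply Rmult_le_pos; lra). lra.
  - apply partial_bound; assumption.
  - assert (Hc : Un_cv (fun n => sum_f_R0 (fun j => exp (- t) * t ^ j / INR (fact j) * pr c) n) (pr c)).
    { apply cv_lim_eq with ((exp (-t) * pr c) * exp t).
      - intros e He. destruct (CV_mult (fun _ => exp (-t) * pr c) (E t) _ _ (cv_const _) (E_cv t) e He) as [N0 HN0].
        exists N0. intros n Hn. specialize (HN0 n Hn). simpl in HN0.
        unfold E in HN0. rewrite scal_sum in HN0.
        rewrite (sum_eq _ (fun i => q t i * (exp (- t) * pr c))). exact HN0.
        intros; unfold q, Rdiv; ring.
      - rewrite exp_Ropp. field. pose proof (exp_pos t); lra. }
    intros e He. destruct (CV_minus _ _ _ _ Hs Hc e He) as [N0 HN0].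
    exists N0. intros n Hn. specialize (HN0 n Hn). simpl in HN0.
    rewrite <- minus_sum in HN0.
    rewrite (sum_eq _ (fun i => exp (- t) * t ^ i / INR (fact i) * pr (x0 (k - Z.of_nat i)%Z) - exp (- t) * t ^ i / INR (fact i) * pr c)).
    exact HN0. intros; ring.
Qed.
End Part.

Theorem theorem2 (x0 : Z -> Cx) (x : Z -> R -> Cx) (c : Cx) :
  bounded_seq x0 ->
  is_solution x0 x ->
  good x0 x ->
  (exists C0 : R, 0 < C0 /\ exists N : nat, forall n : nat, (N <= n)%nat -> (1 <= n)%nat ->
     forall k : Z,
       Cmod (Csub (Cscal (/ INR n) (csum1 (fun j => x0 (k - Z.of_nat j)%Z) n)) c)
         <= C0 * / INR n) ->
  exists C1 : R, 0 < C1 /\ exists T : R, forall t : R, T <= t -> 0 < t ->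
    forall k : Z, Cmod (Csub (x k t) c) <= C1 * / sqrt t.
Proof.
  intros [M HM] Hsol _ [C0 [HC0 [N Hh]]].
  assert (hM : 0 <= M) by (pose proof (HM 0%Z); pose proof (Cmod_ge0 (x0 0%Z)); lra).
  set (B1 := C0 + (M + Rabs (Cre c)) + INR N * (M + Rabs (Cre c))).
  set (B2 := C0 + (M + Rabs (Cim c)) + INR N * (M + Rabs (Cim c))).
  assert (0 <= B1).
  { unfold B1. pose proof (Rabs_pos (Cre c)). pose proof (pos_INR N).
    assert (0 <= INR N * (M + Rabs (Cre c))) by (apply Rmult_le_pos; lra). lra. }
  assert (0 <= B2).
  { unfold B2. pose proof (Rabs_pos (Cim c)). pose proof (pos_INR N).
    assert (0 <= INR N * (M + Rabs (Cim c))) by (apply Rmult_le_pos; lra). lra. }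
  exists (B1 + B2 + 1). split. lra. exists 0. intros t _ ht k.
  destruct (Hsol k t ltac:(lra)) as [Hs1 Hs2].
  pose proof (part Cre ltac:(reflexivity) ltac:(reflexivity) ltac:(reflexivity) Cre_le ltac:(reflexivity)
     x0 M C0 N c k t _ HM HC0 Hh ht Hs1) as P1.
  pose proof (part Cim ltac:(reflexivity) ltac:(reflexivity) ltac:(reflexivity) Cim_le ltac:(reflexivity)
     x0 M C0 N c k t _ HM HC0 Hh ht Hs2) as P2.
  fold B1 in P1. fold B2 in P2.
  eapply Rle_trans. apply Cmod_le.
  assert (hs : 0 < sqrt t) by (apply sqrt_lt_R0; lra).
  assert (0 < / sqrt t) by (apply Rinv_0_lt_compat; lra).
  unfold Rdiv in P1, P2.
  change (Cre (Csub (x k t) c)) with (Cre (x k t) - Cre c).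
  change (Cim (Csub (x k t) c)) with (Cim (x k t) - Cim c).
  rewrite !Rmult_plus_distr_r. lra.
Qed.
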